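(* Assume $b<0$ and $a>0$, and let $(J,E)\in D_1$. Then, as $E\to E_+(J)$, \[ \lim_{E\to E_+(J)}T(J,E)=+\infty,\qquad \lim_{E\to E_+(J)}\tilde M(J,E)=+\infty,\qquad \lim_{E\to E_+(J)}\frac{\tilde M(J,E)}{T(J,E)}=\frac{q^2-a}{2b}, \] \[ \lim_{E\to E_+(J)}\tilde P(J,E)=+\infty,\qquad \lim_{E\to E_+(J)}\frac{\tilde P(J,E)}{T(J,E)}=\frac{q(q^2-a)}{2b}. \]
   Context: Consider the profile equation $u_{xx}+au+b|u|^2u=0$ (defocusing case $b<0$, with $a>0$), with conserved angular momentum $J=\Im(u\bar u_x)$ and energy $E=\frac12|u_x|^2+\frac a2|u|^2+\frac b4|u|^4$; without loss of generality $J\ge 0$. Writing $u=re^{i\phi}$, one has $E=\frac{r_x^2}{2}+V_J(r)$ with potential $V_J(r)=\frac{J^2}{2r^2}+a\frac{r^2}{2}+b\frac{r^4}{4}$. For $0<J<\sqrt{\frac{4}{27}\frac{a^3}{b^2}}$, parametrize $J=q\frac{q^2-a}{b}=Q\frac{Q^2-a}{b}$ with $0<q^2<\frac a3<Q^2<a$ ($q,Q$ of the same sign as $J$), and set $E_-(J)=\frac{1}{4b}(Q^2-a)(3Q^2+a)$ (local minimum value of $V_J$) and $E_+(J)=\frac{1}{4b}(q^2-a)(3q^2+a)$ (local maximum value of $V_J$). The domain is $D_1=\{(J,E)\in\mathbb R^2:0<J<\sqrt{\frac{4}{27}\frac{a^3}{b^2}},\ E_-(J)<E<E_+(J)\}$.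 For $(J,E)\in D_1$, let $r_1<r_2<r_3$ be the three positive roots of $E-V_J(r)$, and define the period, mass and momentum of the corresponding solution by $T(J,E)=2\int_{r_1}^{r_2}\frac{dr}{\sqrt{2(E-V_J(r))}}$, $\tilde M(J,E)=\frac12\int_0^{T}|u|^2dx=\int_{r_1}^{r_2}\frac{r^2\,dr}{\sqrt{2(E-V_J(r))}}$, $\tilde P(J,E)=\frac12\Im\int_0^T u\bar u_x\,dx=\frac12 T(J,E)J$. *)

(* Defs.v *)
From Stdlib Require Import Reals Lra ClassicalEpsilon.
From Coquelicot Require Import Coquelicot.
Open Scope R_scope.

Definition VJ (a b J r : R) : R :=
  J ^ 2 / (2 * r ^ 2) + a * r ^ 2 / 2 + b * r ^ 4 / 4.

Definition three_roots (a b J E : R) (t : R * R * R) : Prop :=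
  let '(r1, r2, r3) := t in
  0 < r1 /\ r1 < r2 /\ r2 < r3 /\
  (forall r, 0 < r -> (E - VJ a b J r = 0 <-> (r = r1 \/ r = r2 \/ r = r3))).

Definition roots (a b J E : R) : R * R * R :=
  epsilon (inhabits (0, 0, 0)) (three_roots a b J E).

Definition root1 a b J E : R := fst (fst (roots a b J E)).
Definition root2 a b J E : R := snd (fst (roots a b J E)).

Definition Tper (a b J E : R) : R :=
  2 * RInt_gen (fun r => / sqrt (2 * (E - VJ a b J r)))
        (at_right (root1 a b J E)) (at_left (root2 a b J E)).

Definition Mtil (a b J E : R) : R :=
  RInt_gen (fun r => r ^ 2 / sqrt (2 * (E - VJ a b J r)))
        (at_right (root1 a b J E)) (at_left (root2 a b J E)).

Definition Ptil (a b J E : R) : R := / 2 * Tper a b J E * J.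

Definition Eplus_J (a b q : R) : R := / (4 * b) * (q ^ 2 - a) * (3 * q ^ 2 + a).

(* Main.v *)
Require Import Defs.
From Stdlib Require Import Reals.
From Coquelicot Require Import Coquelicot.
From Stdlib Require Import Lra ClassicalEpsilon.
Open Scope R_scope.

Lemma ptwise (h r al be K : R) : al < r < be -> 0 <= h -> 0 <= K ->
  h ^ 2 * ((r - al) * (be - r)) <= K ^ 2 ->
  h <= K * sqrt 2 / sqrt (be - al) * (/ sqrt (r - al) + / sqrt (be - r)).
Proof.
  intros [H1 H2] Hh HK Hb.
  set (u := sqrt (r - al)). set (v := sqrt (be - r)). set (w := sqrt (be - al)).
  assert (hu : 0 < u) by (apply sqrt_lt_R0; lra).
  assert (hv : 0 < v) by (apply sqrt_lt_R0; lra).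
  assert (hw : 0 < w) by (apply sqrt_lt_R0; lra).
  assert (hu2 : u * u = r - al) by (apply sqrt_sqrt; lra).
  assert (hv2 : v * v = be - r) by (apply sqrt_sqrt; lra).
  assert (hw2 : w * w = be - al) by (apply sqrt_sqrt; lra).
  assert (h2 : 0 < sqrt 2) by (apply sqrt_lt_R0; lra).
  assert (h22 : sqrt 2 * sqrt 2 = 2) by (apply sqrt_sqrt; lra).
  assert (huv : h * (u * v) <= K).
  { assert ((h * (u*v))^2 <= K^2).
    { replace ((h * (u*v))^2) with (h^2 * ((u*u)*(v*v))) by ring. rewrite hu2, hv2. lra. }
    assert (0 <= h * (u*v)) by (apply Rmult_le_pos; [lra| nra]).
    nra. }
  assert (hw3 : w <= sqrt 2 * (u + v)).
  { assert (w * w <= (sqrt 2 * (u+v)) * (sqrt 2 * (u+v))).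
    { replace ((sqrt 2 * (u+v)) * (sqrt 2 * (u+v))) with ((sqrt 2 * sqrt 2) * ((u+v)*(u+v))) by ring.
      rewrite h22. nra. }
    destruct (Rle_or_lt w (sqrt 2 * (u + v))) as [|Hc]; auto.
    assert (0 <= sqrt 2 * (u+v)) by nra. nra. }
  apply Rle_trans with (K / (u * v)).
  { assert (0 < u*v) by (apply Rmult_lt_0_compat; lra).
    apply Rmult_le_reg_r with (u*v). lra. unfold Rdiv. rewrite Rmult_assoc, Rinv_l; lra. }
  assert (E : K * sqrt 2 / w * (/ u + / v) - K / (u * v) = K * (sqrt 2 * (u + v) - w) / (w * (u * v))).
  { field. repeat split; lra. }
  assert (0 <= K * (sqrt 2 * (u + v) - w) / (w * (u * v))).
  { unfold Rdiv. apply Rmult_le_pos. apply Rmult_le_pos; lra.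
    apply Rlt_le, Rinv_0_lt_compat. apply Rmult_lt_0_compat; [lra|apply Rmult_lt_0_compat; lra]. }
  lra.
Qed.

Definition gmaj (al be M : R) (r : R) := M * (/ sqrt (r - al) + / sqrt (be - r)).

Lemma gmaj_cont al be M r : al < r < be -> continuous (gmaj al be M) r.
Proof.
  intros Hr. apply (ex_derive_continuous (gmaj al be M)). unfold gmaj. auto_derive.
  repeat split; try lra.
  - apply Rgt_not_eq, sqrt_lt_R0; lra.
  - apply Rgt_not_eq, sqrt_lt_R0; lra.
Qed.

Lemma gmaj_int al be M x y : al < x -> x <= y -> y < be -> 0 <= M ->
  ex_RInt (gmaj al be M) x y /\ RInt (gmaj al be M) x y <= 4 * M * sqrt (be - al).
Proof.
  intros Hx Hxy Hy HM.
  assert (HI : is_RInt (gmaj al be M) x y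
     (minus (M * (2 * sqrt (y - al) - 2 * sqrt (be - y))) (M * (2 * sqrt (x - al) - 2 * sqrt (be - x))))).
  { apply (is_RInt_derive (fun r => M * (2 * sqrt (r - al) - 2 * sqrt (be - r)))).
    - intros r Hr. rewrite Rmin_left in Hr by lra. rewrite Rmax_right in Hr by lra.
      auto_derive.
      + repeat split; lra.
      + unfold gmaj. replace (r + - al) with (r - al) by ring. replace (be + - r) with (be - r) by ring. field. split; apply Rgt_not_eq, sqrt_lt_R0; lra.
    - intros r Hr. rewrite Rmin_left in Hr by lra. rewrite Rmax_right in Hr by lra.
      apply gmaj_cont; lra. }
  split. eexists; exact HI.
  rewrite (is_RInt_unique _ _ _ _ HI). unfold minus, plus, opp; simpl.
  assert (sqrt (y - al) <= sqrt (be - al)) by (apply sqrt_le_1_alt; lra).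
  assert (sqrt (be - x) <= sqrt (be - al)) by (apply sqrt_le_1_alt; lra).
  assert (0 <= sqrt (x - al)) by apply sqrt_pos.
  assert (0 <= sqrt (be - y)) by apply sqrt_pos.
  nra.
Qed.

Lemma at_right_ev al d (P : R -> Prop) : 0 < d -> (forall x, al < x < al + d -> P x) -> at_right al P.
Proof.
  intros Hd H. exists (mkposreal d Hd). intros y Hb Hy. apply H.
  change (Rabs (y - al) < d) in Hb. apply Rabs_def2 in Hb. lra.
Qed.

Lemma at_left_ev be d (P : R -> Prop) : 0 < d -> (forall x, be - d < x < be -> P x) -> at_left be P.
Proof.
  intros Hd H. exists (mkposreal d Hd). intros y Hb Hy. apply H.
  change (Rabs (y - be) < d) in Hb. apply Rabs_def2 in Hb. lra.
Qed.

Lemma improper (h : R -> R) (al be K : R) :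
  al < be -> 0 <= K ->
  (forall r, al < r < be -> continuous h r) ->
  (forall r, al < r < be -> 0 <= h r) ->
  (forall r, al < r < be -> h r ^ 2 * ((r - al) * (be - r)) <= K ^ 2) ->
  exists l, is_RInt_gen h (at_right al) (at_left be) l /\ l <= 4 * sqrt 2 * K /\
   (forall x y, al < x -> x <= y -> y < be -> RInt h x y <= l).
Proof.
  intros Hab HK Hc Hp Hb.
  assert (exh : forall x y, al < x -> x < be -> al < y -> y < be -> ex_RInt h x y).
  { intros x y H1 H2 H3 H4. apply (ex_RInt_continuous (V := R_CompleteNormedModule)). intros z Hz. apply Hc.
    split. apply Rlt_le_trans with (Rmin x y). apply Rmin_glb_lt; lra. lra.
    apply Rle_lt_trans with (Rmax x y). lra. apply Rmax_lub_lt; lra. }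
  assert (hw : 0 < sqrt (be - al)) by (apply sqrt_lt_R0; lra).
  assert (h2 : 0 < sqrt 2) by (apply sqrt_lt_R0; lra).
  set (M := K * sqrt 2 / sqrt (be - al)).
  assert (HM : 0 <= M). { unfold M. apply Rmult_le_pos. nra. apply Rlt_le, Rinv_0_lt_compat; lra. }
  assert (bnd : forall x y, al < x -> x <= y -> y < be -> RInt h x y <= 4 * sqrt 2 * K).
  { intros x y H1 H2 H3. destruct (gmaj_int al be M x y H1 H2 H3 HM) as [Hex Hle].
    apply Rle_trans with (RInt (gmaj al be M) x y).
    - apply RInt_le; auto. apply exh; lra.
      intros r Hr. unfold gmaj, M. apply ptwise; auto; try lra.
      apply Hp; lra. apply Hb; lra.
    - apply Rle_trans with (1 := Hle). unfold M. right. field. lra. }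
  set (S := fun v => exists x y, al < x /\ x <= y /\ y < be /\ v = RInt h x y).
  destruct (completeness S) as [l [Hub Hlub]].
  { exists (4 * sqrt 2 * K). intros v [x [y [H1 [H2 [H3 ->]]]]]. apply bnd; auto. }
  { exists (RInt h ((al+be)/2) ((al+be)/2)). exists ((al+be)/2), ((al+be)/2). repeat split; lra. }
  exists l. split; [|split].
  - unfold is_RInt_gen. apply (filterlimi_lim_ext_loc (fun ab => RInt h (fst ab) (snd ab))).
    + apply (Filter_prod _ _ _ (fun x => al < x < be) (fun y => al < y < be)).
      * apply at_right_ev with (be - al). lra. intros; lra.
      * apply at_left_ev with (be - al). lra. intros; lra.
      * intros x y Hx Hy. simpl. apply (RInt_correct (V := R_CompleteNormedModule)). apply exh; lra.
    + apply filterlim_locally. intros eps.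
      assert (Hex : exists v, S v /\ l - eps < v).
      { apply NNPP. intro Hn. assert (l <= l - eps).
        { apply Hlub. intros v Hv. destruct (Rle_or_lt v (l - eps)) as [|Hlt]; auto.
          exfalso. apply Hn. exists v; auto. }
        destruct eps; simpl in *; lra. }
      destruct Hex as [v [[x0 [y0 [H1 [H2 [H3 ->]]]]] Hv]].
      apply (Filter_prod _ _ _ (fun x => al < x <= x0) (fun y => y0 <= y < be)).
      * apply at_right_ev with (x0 - al). lra. intros; lra.
      * apply at_left_ev with (be - y0). lra. intros; lra.
      * intros x y Hx Hy. simpl. change (Rabs (RInt h x y - l) < eps).
        assert (Hle : RInt h x y <= l). { apply Hub. exists x, y. repeat split; lra. }
        assert (E1 : RInt h x y = RInt h x x0 + RInt h x0 y0 + RInt h y0 y).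
        { rewrite <- (RInt_Chasles h x x0 y), <- (RInt_Chasles h x0 y0 y); try (apply exh; lra).
          unfold plus; simpl; ring. }
        assert (0 <= RInt h x x0). { apply RInt_ge_0. lra. apply exh; lra. intros; apply Hp; lra. }
        assert (0 <= RInt h y0 y). { apply RInt_ge_0. lra. apply exh; lra. intros; apply Hp; lra. }
        rewrite Rabs_left1 by lra. lra.
  - apply Hlub. intros v [x [y [H1 [H2 [H3 ->]]]]]. apply bnd; auto.
  - intros x y H1 H2 H3. apply Hub. exists x, y. repeat split; auto.
Qed.

Definition Pp (a b J E s : R) := E*s - J^2/2 - a*s^2/2 - b*s^3/4.

Lemma Pp_id a b J q E s : b <> 0 -> J = q*(q^2-a)/b ->
  Pp a b J E s = (-b/4) * (s - (q^2-a)/b)^2 * (s - (-2*q^2/b)) - (Eplus_J a b q - E) * s.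
Proof. intros Hb ->. unfold Pp, Eplus_J. field. auto. Qed.

Lemma VJ_id a b J E r : r <> 0 -> E - VJ a b J r = Pp a b J E (r^2) / r^2.
Proof. intros Hr. unfold VJ, Pp. field. auto. Qed.

Lemma Pp_cont a b J E : continuity (Pp a b J E).
Proof.
  intros x. apply continuity_pt_filterlim. apply (ex_derive_continuous (Pp a b J E)).
  unfold Pp. auto_derive. auto.
Qed.

Lemma factor3 a b J E s1 s2 s3 : b <> 0 -> s1 < s2 < s3 ->
  Pp a b J E s1 = 0 -> Pp a b J E s2 = 0 -> Pp a b J E s3 = 0 ->
  forall s, Pp a b J E s = (-b/4) * (s - s1) * (s - s2) * (s - s3).
Proof.
  intros Hb Hs e1 e2 e3 s.
  set (c := -b/4).
  set (B2 := -a/2 + c*(s1+s2+s3)). set (B1 := E - c*(s1*s2+s1*s3+s2*s3)).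
  set (B0 := -J^2/2 + c*s1*s2*s3).
  assert (Hg : forall t, Pp a b J E t = c*(t-s1)*(t-s2)*(t-s3) + (B2*t^2 + B1*t + B0)).
  { intros t. unfold Pp, B2, B1, B0, c. field. }
  rewrite Hg in e1, e2, e3.
  assert (f1 : B2*s1^2 + B1*s1 + B0 = 0) by (rewrite <- e1; ring).
  assert (f2 : B2*s2^2 + B1*s2 + B0 = 0) by (rewrite <- e2; ring).
  assert (f3 : B2*s3^2 + B1*s3 + B0 = 0) by (rewrite <- e3; ring).
  assert (g12 : B2*(s1+s2) + B1 = 0).
  { assert ((s1 - s2) * (B2*(s1+s2) + B1) = 0) by (rewrite <- (Rminus_diag_eq _ _ (eq_trans f1 (eq_sym f2))); ring).
    apply Rmult_integral in H. destruct H; auto. lra. }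
  assert (g13 : B2*(s1+s3) + B1 = 0).
  { assert ((s1 - s3) * (B2*(s1+s3) + B1) = 0) by (rewrite <- (Rminus_diag_eq _ _ (eq_trans f1 (eq_sym f3))); ring).
    apply Rmult_integral in H. destruct H; auto. lra. }
  assert (hB2 : B2 = 0).
  { assert ((s2 - s3) * B2 = 0) by (rewrite <- (Rminus_diag_eq _ _ (eq_trans g12 (eq_sym g13))); ring).
    apply Rmult_integral in H. destruct H; auto. lra. }
  assert (hB1 : B1 = 0) by (rewrite hB2 in g12; lra).
  assert (hB0 : B0 = 0) by (rewrite hB2, hB1 in f1; lra).
  rewrite Hg, hB2, hB1, hB0. ring.
Qed.

Lemma three_uniq a b J E x1 x2 x3 y1 y2 y3 :
  three_roots a b J E (x1, x2, x3) -> three_roots a b J E (y1, y2, y3) ->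
  x1 = y1 /\ x2 = y2 /\ x3 = y3.
Proof.
  simpl. intros [hx1 [hx2 [hx3 Hx]]] [hy1 [hy2 [hy3 Hy]]].
  assert (mx : forall z, z = x1 \/ z = x2 \/ z = x3 -> z = y1 \/ z = y2 \/ z = y3).
  { intros z Hz. assert (0 < z) by (destruct Hz as [->|[->| ->]]; lra).
    apply Hy; auto. apply Hx; auto. }
  assert (my : forall z, z = y1 \/ z = y2 \/ z = y3 -> z = x1 \/ z = x2 \/ z = x3).
  { intros z Hz. assert (0 < z) by (destruct Hz as [->|[->| ->]]; lra).
    apply Hx; auto. apply Hy; auto. }
  pose proof (mx x1 (or_introl eq_refl)) as a1.
  pose proof (mx x2 (or_intror (or_introl eq_refl))) as a2.
  pose proof (mx x3 (or_intror (or_intror eq_refl))) as a3.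
  pose proof (my y1 (or_introl eq_refl)) as b1.
  pose proof (my y2 (or_intror (or_introl eq_refl))) as b2.
  pose proof (my y3 (or_intror (or_intror eq_refl))) as b3.
  assert (e1 : x1 = y1) by (destruct a1 as [|[|]]; destruct b1 as [|[|]]; lra).
  assert (e3 : x3 = y3) by (destruct a3 as [|[|]]; destruct b3 as [|[|]]; lra).
  split; auto. split; auto.
  destruct a2 as [|[|]]; lra.
Qed.

Lemma sqrt_sq_eq r s : 0 < r -> 0 <= s -> (r ^ 2 = s <-> r = sqrt s).
Proof.
  intros Hr Hs. split.
  - intros <-. rewrite sqrt_pow2; lra.
  - intros ->. apply pow2_sqrt; auto.
Qed.

Lemma roots_spec a b J q E :
  0 < a -> b < 0 -> 0 < q -> q^2 < a/3 -> J = q*(q^2-a)/b ->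
  let rho := (q^2-a)/b in let sig := -2*q^2/b in let m := (sig+rho)/2 in let c := -b/4 in
  Eplus_J a b q - Rmin (c*(m-rho)^2*(m-sig)/m) (c*rho*(2*rho-sig)/2) < E < Eplus_J a b q ->
  exists s1 s2 s3, sig < s1 < m /\ m < s2 < rho /\ rho < s3 /\
    (forall s, Pp a b J E s = c*(s-s1)*(s-s2)*(s-s3)) /\
    root1 a b J E = sqrt s1 /\ root2 a b J E = sqrt s2.
Proof.
  intros ha hb hq0 hq1 hJq rho sig m c HE.
  assert (hsig : 0 < sig). { replace sig with (2*q^2 * / (-b)) by (unfold sig; field; lra).
    apply Rmult_lt_0_compat. nra. apply Rinv_0_lt_compat; lra. }
  assert (hsr : sig < rho).
  { unfold sig, rho. apply Rmult_lt_reg_l with (-b). lra.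
    replace (-b * (-2*q^2/b)) with (2*q^2) by (field; lra).
    replace (-b * ((q^2-a)/b)) with (a - q^2) by (field; lra). lra. }
  assert (hc : 0 < c) by (unfold c; lra).
  assert (hm1 : sig < m) by (unfold m; lra).
  assert (hm2 : m < rho) by (unfold m; lra).
  set (d := Eplus_J a b q - E).
  assert (hd : 0 < d) by (unfold d; lra).
  assert (hd1 : d < c*(m-rho)^2*(m-sig)/m) by (unfold d; pose proof (Rmin_l (c*(m-rho)^2*(m-sig)/m) (c*rho*(2*rho-sig)/2)); lra).
  assert (hd2 : d < c*rho*(2*rho-sig)/2) by (unfold d; pose proof (Rmin_r (c*(m-rho)^2*(m-sig)/m) (c*rho*(2*rho-sig)/2)); lra).
  assert (Pid : forall s, Pp a b J E s = c*(s-rho)^2*(s-sig) - d*s).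
  { intros s. unfold c, rho, sig, d. apply Pp_id; auto; lra. }
  assert (P1 : Pp a b J E sig < 0) by (rewrite Pid; nra).
  assert (P2 : 0 < Pp a b J E m).
  { rewrite Pid. apply Rmult_lt_compat_r with (r := m) in hd1; [|lra].
    unfold Rdiv in hd1. rewrite Rmult_assoc, Rinv_l, Rmult_1_r in hd1 by lra. lra. }
  assert (P3 : Pp a b J E rho < 0) by (rewrite Pid; nra).
  assert (P4 : 0 < Pp a b J E (2*rho)).
  { rewrite Pid. replace ((2*rho - rho)^2) with (rho^2) by ring. nra. }
  destruct (IVT (Pp a b J E) sig m (Pp_cont a b J E) hm1 P1 P2) as [s1 [Hs1 e1]].
  destruct (IVT (fun s => - Pp a b J E s) m rho) as [s2 [Hs2 e2]].
  { apply continuity_opp, Pp_cont. } { lra. } { lra. } { lra. }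
  destruct (IVT (Pp a b J E) rho (2*rho) (Pp_cont a b J E)) as [s3 [Hs3 e3]]; [lra|lra|lra|].
  assert (e2' : Pp a b J E s2 = 0) by lra.
  assert (s1 <> sig) by (intro; subst; lra).
  assert (s1 <> m) by (intro; subst; lra).
  assert (s2 <> m) by (intro; subst; lra).
  assert (s2 <> rho) by (intro; subst; lra).
  assert (s3 <> rho) by (intro; subst; lra).
  assert (F : forall s, Pp a b J E s = c*(s-s1)*(s-s2)*(s-s3)).
  { apply factor3; auto; lra. }
  exists s1, s2, s3. split; [lra|split;[lra|split;[lra|split;[auto|]]]].
  assert (T : three_roots a b J E (sqrt s1, sqrt s2, sqrt s3)).
  { simpl. split. apply sqrt_lt_R0; lra.
    split. apply sqrt_lt_1_alt; lra. split. apply sqrt_lt_1_alt; lra.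
    intros r Hr. rewrite VJ_id by lra. rewrite F.
    rewrite <- !sqrt_sq_eq by lra.
    split.
    - intros Hq. assert (H' : c * (r^2 - s1) * (r^2 - s2) * (r^2 - s3) = 0).
      { apply Rmult_eq_reg_r with (/ r^2). rewrite Rmult_0_l. exact Hq.
        apply Rinv_neq_0_compat. apply pow_nonzero. lra. }
      apply Rmult_integral in H'. destruct H' as [H'|H']; [|right; right; lra].
      apply Rmult_integral in H'. destruct H' as [H'|H']; [|right; left; lra].
      apply Rmult_integral in H'. destruct H' as [H'|H']; [lra|left; lra].
    - intros [Hq|[Hq|Hq]]; rewrite Hq; unfold Rdiv; ring. }
  assert (T' := epsilon_spec (inhabits (0, 0, 0)) (three_roots a b J E) (ex_intro _ _ T)).
  fold (roots a b J E) in T'.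
  unfold root1, root2. destruct (roots a b J E) as [[y1 y2] y3].
  destruct (three_uniq _ _ _ _ _ _ _ _ _ _ T T') as [-> [-> _]]. simpl. auto.
Qed.

Lemma div_le A B K : 0 < B -> A <= K * B -> A / B <= K.
Proof. intros HB H. apply Rmult_le_reg_r with B; auto. unfold Rdiv. rewrite Rmult_assoc, Rinv_l; lra. Qed.

Lemma inv_sqrt_sq Y : 0 < Y -> (/ sqrt Y)^2 = / Y.
Proof. intros HY. rewrite pow_inv, pow2_sqrt; lra. Qed.

Lemma cont_w a b J E (w : R -> R) r : ex_derive w r -> r <> 0 -> 0 < E - VJ a b J r ->
  continuous (fun r => w r * / sqrt (2 * (E - VJ a b J r))) r.
Proof.
  intros Hw Hr HX. apply (ex_derive_continuous (fun r => w r * / sqrt (2 * (E - VJ a b J r)))).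
  unfold VJ in *. auto_derive.
  assert (HX' : 0 < 2 * (E - (J ^ 2 / (2 * r ^ 2) + a * r ^ 2 / 2 + b * r ^ 4 / 4))) by lra.
  unfold Rminus, Rdiv in HX'. simpl in HX'.
  assert (r * (r * 1) <> 0) by (rewrite Rmult_1_r; apply Rmult_integral_contrapositive; auto).
  repeat split; auto; try lra.
  apply Rgt_not_eq, sqrt_lt_R0. exact HX'.
Qed.

Lemma sq_bound (X wv r r1 r2 s1 s2 s3 c K2 : R) :
  0 < c -> 0 < r1 -> r1 < r -> r < r2 -> s1 = r1^2 -> s2 = r2^2 -> s2 < s3 -> 0 < X ->
  X * r^2 = c*(r^2-s1)*(r^2-s2)*(r^2-s3) ->
  wv^2 * r^2 <= 2*K2*c*((r+r1)*(r2+r)*(s3-r^2)) ->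
  (wv * / sqrt (2 * X))^2 * ((r - r1) * (r2 - r)) <= K2.
Proof.
  intros hc h1 h2 h3 e1 e2 h4 hX hXid hw.
  rewrite Rpow_mult_distr, inv_sqrt_sq by lra.
  set (P := (r - r1) * (r2 - r)).
  assert (hP : 0 < P) by (unfold P; apply Rmult_lt_0_compat; lra).
  assert (hr2 : 0 < r^2) by (apply pow_lt; lra).
  assert (Hid : 2 * K2 * (X * r^2) = P * (2*K2*c*((r+r1)*(r2+r)*(s3-r^2)))).
  { rewrite hXid, e1, e2. unfold P. ring. }
  assert (H1 : wv^2 * P * r^2 <= 2 * K2 * X * r^2).
  { replace (2 * K2 * X * r^2) with (2 * K2 * (X * r^2)) by ring. rewrite Hid.
    replace (wv^2 * P * r^2) with (P * (wv^2 * r^2)) by ring.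
    apply Rmult_le_compat_l; lra. }
  assert (H2 : wv^2 * P <= K2 * (2 * X)).
  { apply Rmult_le_reg_r with (r^2); auto. lra. }
  replace (wv ^ 2 * / (2 * X) * P) with (wv^2 * P / (2 * X)) by (field; lra).
  apply div_le; lra.
Qed.

Lemma integ_E a b J E s1 s2 s3 rho sig c d :
  0 < c -> 0 < sig -> sig < s1 -> s1 < s2 -> s2 < rho -> rho < s3 -> 0 < d ->
  (forall r, r <> 0 -> (E - VJ a b J r) * r^2 = c*(r^2-s1)*(r^2-s2)*(r^2-s3)) ->
  (forall r, r <> 0 -> (E - VJ a b J r) * r^2 = c*(r^2-rho)^2*(r^2-sig) - d*r^2) ->
  root1 a b J E = sqrt s1 -> root2 a b J E = sqrt s2 ->
  exists l1, Tper a b J E = 2*l1 /\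
    0 <= rho*l1 - Mtil a b J E <= 4*sqrt 2*sqrt(rho/(2*c)) /\
    (forall x y, sqrt s1 < x -> x <= y -> y < sqrt s2 ->
       / sqrt(8*c*rho) * (ln(sqrt rho - x) - ln(sqrt rho - y)) <= l1).
Proof.
  intros hc hsig h1 h2 h3 h4 hd Id1 Id2 R1 R2.
  set (r1 := sqrt s1). set (r2 := sqrt s2). set (rs := sqrt rho).
  assert (e1 : s1 = r1^2) by (unfold r1; rewrite pow2_sqrt; lra).
  assert (e2 : s2 = r2^2) by (unfold r2; rewrite pow2_sqrt; lra).
  assert (es : rho = rs^2) by (unfold rs; rewrite pow2_sqrt; lra).
  assert (hr1 : 0 < r1) by (apply sqrt_lt_R0; lra).
  assert (hr12 : r1 < r2) by (apply sqrt_lt_1_alt; lra).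
  assert (hr2s : r2 < rs) by (apply sqrt_lt_1_alt; lra).
  assert (ins : forall r, r1 < r < r2 -> s1 < r^2 < s2).
  { intros r Hr. rewrite e1, e2. split; nra. }
  assert (Xpos : forall r, r1 < r < r2 -> 0 < E - VJ a b J r).
  { intros r Hr. pose proof (ins r Hr). pose proof (Id1 r ltac:(lra)).
    assert (0 < r^2) by (apply pow_lt; lra).
    assert (0 < c*(r^2-s1)*(r^2-s2)*(r^2-s3)).
    { replace (c*(r^2-s1)*(r^2-s2)*(r^2-s3)) with (c*(r^2-s1)*((s2-r^2)*(s3-r^2))) by ring.
      apply Rmult_lt_0_compat. apply Rmult_lt_0_compat; lra. apply Rmult_lt_0_compat; lra. }
    destruct (Rle_or_lt (E - VJ a b J r) 0); auto. nra. }
  set (f := fun r => / sqrt (2 * (E - VJ a b J r))).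
  set (g := fun r => r ^ 2 / sqrt (2 * (E - VJ a b J r))).
  set (h := fun r => (rho - r^2) * / sqrt (2 * (E - VJ a b J r))).
  assert (fpos : forall r, r1 < r < r2 -> 0 < f r).
  { intros r Hr. unfold f. apply Rinv_0_lt_compat, sqrt_lt_R0. pose proof (Xpos r Hr). lra. }
  destruct (improper f r1 r2 (sqrt (/ (2*c*(s3-s2))))) as [l1 [I1 [B1 L1]]]; auto.
  { apply sqrt_pos. }
  { intros r Hr. apply (continuous_ext (fun r => 1 * / sqrt (2 * (E - VJ a b J r)))).
    intros x; unfold f; apply Rmult_1_l. apply cont_w; [auto_derive; auto| lra | apply Xpos; auto]. }
  { intros r Hr. apply Rlt_le, fpos; auto. }
  { intros r Hr. rewrite pow2_sqrt.
    2:{ apply Rlt_le, Rinv_0_lt_compat. apply Rmult_lt_0_compat; lra. }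
    replace (f r) with (1 * / sqrt (2 * (E - VJ a b J r))) by (unfold f; ring).
    pose proof (ins r Hr).
    apply sq_bound with s1 s2 s3 c; auto; try lra; try (apply Xpos; auto; fail); try (apply Id1; lra).
    replace (2 * / (2 * c * (s3 - s2)) * c * ((r + r1) * (r2 + r) * (s3 - r ^ 2)))
      with (((r + r1) * (r2 + r)) * ((s3 - r ^ 2) / (s3 - s2))) by (field; lra).
    assert (1 <= (s3 - r ^ 2) / (s3 - s2)).
    { apply Rmult_le_reg_r with (s3 - s2). lra. unfold Rdiv. rewrite Rmult_assoc, Rinv_l; lra. }
    assert (r^2 <= (r + r1) * (r2 + r)) by nra.
    nra. }
  assert (A1 : forall r, r1 < r < r2 -> r^2 <= (r + r1) * (r2 + r)) by (intros; nra).
  destruct (improper g r1 r2 (sqrt (s2^2 / (2*c*(s3-s2))))) as [l2 [I2 [B2 L2]]]; auto.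
  { apply sqrt_pos. }
  { intros r Hr. unfold g. apply (cont_w a b J E (fun r => r^2)); [auto_derive; auto| lra | apply Xpos; auto]. }
  { intros r Hr. unfold g. unfold Rdiv. apply Rmult_le_pos. apply pow2_ge_0. apply Rlt_le, fpos; auto. }
  { intros r Hr. rewrite pow2_sqrt.
    2:{ apply Rmult_le_pos. apply pow2_ge_0. apply Rlt_le, Rinv_0_lt_compat. apply Rmult_lt_0_compat; lra. }
    change (g r) with (r^2 * / sqrt (2 * (E - VJ a b J r))).
    pose proof (ins r Hr). pose proof (A1 r Hr).
    apply sq_bound with s1 s2 s3 c; auto; try lra; try (apply Xpos; auto; fail); try (apply Id1; lra).
    replace (2 * (s2 ^ 2 / (2 * c * (s3 - s2))) * c * ((r + r1) * (r2 + r) * (s3 - r ^ 2)))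
      with (s2^2 * ((r + r1) * (r2 + r)) * ((s3 - r ^ 2) / (s3 - s2))) by (field; lra).
    assert (1 <= (s3 - r ^ 2) / (s3 - s2)).
    { apply Rmult_le_reg_r with (s3 - s2). lra. unfold Rdiv. rewrite Rmult_assoc, Rinv_l; lra. }
    assert (0 <= r^2) by apply pow2_ge_0.
    assert ((r^2)^2 <= s2^2) by nra.
    assert ((r^2)^2 * r^2 <= s2^2 * ((r + r1) * (r2 + r))) by nra.
    assert (0 <= s2^2 * ((r + r1) * (r2 + r))) by nra.
    nra. }
  destruct (improper h r1 r2 (sqrt (rho / (2*c)))) as [l3 [I3 [B3 L3]]]; auto.
  { apply sqrt_pos. }
  { intros r Hr. unfold h. apply (cont_w a b J E (fun r => rho - r^2)); [auto_derive; auto| lra | apply Xpos; auto]. }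
  { intros r Hr. unfold h. pose proof (ins r Hr). apply Rmult_le_pos. lra. apply Rlt_le, fpos; auto. }
  { intros r Hr. rewrite pow2_sqrt.
    2:{ apply Rlt_le. unfold Rdiv. apply Rmult_lt_0_compat. lra. apply Rinv_0_lt_compat. lra. }
    pose proof (ins r Hr). pose proof (A1 r Hr).
    apply sq_bound with s1 s2 s3 c; auto; try lra; try (apply Xpos; auto; fail); try (apply Id1; lra).
    replace (2 * (rho / (2 * c)) * c * ((r + r1) * (r2 + r) * (s3 - r ^ 2)))
      with (rho * (s3 - r^2) * ((r + r1) * (r2 + r))) by (field; lra).
    assert (0 <= r^2) by apply pow2_ge_0.
    assert ((rho - r^2)^2 <= rho * (s3 - r^2)) by nra.
    assert ((rho - r^2)^2 * r^2 <= rho * (s3 - r^2) * r^2) by nra.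
    assert (0 <= rho * (s3 - r^2)) by nra.
    nra. }
  assert (PF1 := Proper_StrongProper _ (at_right_proper_filter r1)).
  assert (PF2 := Proper_StrongProper _ (at_left_proper_filter r2)).
  assert (FF1 := filter_filter' (F := at_right r1)).
  assert (FF2 := filter_filter' (F := at_left r2)).
  assert (T1 : Tper a b J E = 2 * l1).
  { unfold Tper. rewrite R1, R2. change (2 * RInt_gen f (at_right r1) (at_left r2) = 2 * l1).
    rewrite (@is_RInt_gen_unique _ _ _ PF1 PF2 f l1 I1). auto. }
  assert (M1 : Mtil a b J E = l2).
  { unfold Mtil. rewrite R1, R2. change (RInt_gen g (at_right r1) (at_left r2) = l2).
    rewrite (@is_RInt_gen_unique _ _ _ PF1 PF2 g l2 I2). auto. }
  assert (I4 : is_RInt_gen h (at_right r1) (at_left r2) (rho * l1 - l2)).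
  { assert (I5 := @is_RInt_gen_minus R_NormedModule _ _ FF1 FF2 (fun y => scal rho (f y)) g (scal rho l1) l2
       (@is_RInt_gen_scal R_NormedModule _ _ FF1 FF2 f rho l1 I1) I2).
    apply (@is_RInt_gen_ext R_NormedModule _ _ FF1 FF2 (fun y => minus (scal rho (f y)) (g y))).
    - apply (@filter_forall _ _ (filter_prod_filter _ _ _ _ FF1 FF2)). intros ab x _.
      change (rho * f x - g x = h x). unfold h, f, g. unfold Rdiv. ring.
    - exact I5. }
  assert (E3 : l3 = rho * l1 - l2).
  { rewrite <- (@is_RInt_gen_unique _ _ _ PF1 PF2 h l3 I3), (@is_RInt_gen_unique _ _ _ PF1 PF2 h _ I4).
    reflexivity. }
  exists l1. split; auto. split.
  { rewrite M1, <- E3. split; auto.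
    apply Rle_trans with (RInt h ((r1+r2)/2) ((r1+r2)/2)).
    rewrite RInt_point. right; reflexivity. apply L3; lra. }
  intros x y Hx Hxy Hy. fold r1 r2 rs in Hx, Hy |- *.
  set (k := / sqrt (8 * c * rho)).
  assert (hk8 : 0 < sqrt (8 * c * rho)) by (apply sqrt_lt_R0; nra).
  assert (Hint : is_RInt (fun r => k / (rs - r)) x y (k * (ln (rs - x) - ln (rs - y)))).
  { assert (HH := is_RInt_derive (V := R_CompleteNormedModule) (fun r => - k * ln (rs - r)) (fun r => k / (rs - r)) x y).
    replace (k * (ln (rs - x) - ln (rs - y))) with (minus (- k * ln (rs - y)) (- k * ln (rs - x))).
    2:{ unfold minus, plus, opp; simpl. ring. }
    apply HH.
    - intros r Hr. rewrite Rmin_left in Hr by lra. rewrite Rmax_right in Hr by lra.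
      auto_derive. lra. field. lra.
    - intros r Hr. rewrite Rmin_left in Hr by lra. rewrite Rmax_right in Hr by lra.
      apply (ex_derive_continuous (fun r => k / (rs - r))). auto_derive. lra. }
  assert (exf : ex_RInt f x y).
  { apply (ex_RInt_continuous (V := R_CompleteNormedModule)). intros z Hz.
    rewrite Rmin_left in Hz by lra. rewrite Rmax_right in Hz by lra.
    apply (continuous_ext (fun r => 1 * / sqrt (2 * (E - VJ a b J r)))).
    intros x0; unfold f; apply Rmult_1_l. apply cont_w; [auto_derive; auto| lra | apply Xpos; lra]. }
  apply Rle_trans with (RInt f x y); [|apply L1; lra].
  rewrite <- (is_RInt_unique _ _ _ _ Hint).
  apply RInt_le; auto. eexists; exact Hint.
  intros r Hr. assert (Hr' : r1 < r < r2) by lra.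
  pose proof (ins r Hr'). pose proof (Xpos r Hr').
  assert (hr2 : 0 < r^2) by (apply pow_lt; lra).
  pose proof (Id2 r ltac:(lra)) as Id2r.
  set (X := E - VJ a b J r) in *.
  assert (HX1 : X * r^2 <= c * (rho - r^2)^2 * r^2).
  { rewrite Id2r. assert (0 <= c*(r^2-rho)^2) by nra. nra. }
  assert (HX2 : X <= c * (rho - r^2)^2) by nra.
  assert (Hq : rho - r^2 <= 2 * rs * (rs - r)) by (rewrite es; nra).
  assert (Hq0 : 0 < rho - r^2) by lra.
  assert (HX3 : 2 * X <= 8 * c * rho * (rs - r)^2).
  { assert (Hb : (rho - r^2)^2 <= (2 * rs * (rs - r))^2) by nra.
    replace ((2 * rs * (rs - r))^2) with (4 * rho * (rs - r)^2) in Hb by (rewrite es; ring). nra. }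
  assert (Hs : sqrt (2 * X) <= sqrt (8 * c * rho) * (rs - r)).
  { rewrite <- (sqrt_pow2 (rs - r)) by lra. rewrite <- sqrt_mult by nra.
    apply sqrt_le_1_alt. lra. }
  unfold f. fold X. unfold k.
  replace (/ sqrt (8 * c * rho) / (rs - r)) with (/ (sqrt (8 * c * rho) * (rs - r))) by (field; lra).
  apply Rinv_le_contravar; auto. apply sqrt_lt_R0. lra.
Qed.

Lemma key a b J q :
  0 < a -> b < 0 -> 0 < q -> q^2 < a/3 -> J = q*(q^2-a)/b ->
  let rho := (q^2-a)/b in let sig := -2*q^2/b in let m := (sig+rho)/2 in let c := -b/4 in
  exists d0, 0 < d0 /\ forall E, Eplus_J a b q - d0 < E < Eplus_J a b q ->
   exists l1 s2, Tper a b J E = 2*l1 /\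
    0 <= rho*l1 - Mtil a b J E <= 4*sqrt 2*sqrt(rho/(2*c)) /\
    m < s2 < rho /\ c*(rho-s2)^2*(s2-sig) = (Eplus_J a b q - E)*s2 /\
    (forall y, sqrt m <= y -> y < sqrt s2 ->
       / sqrt(8*c*rho) * (ln(sqrt rho - sqrt m) - ln(sqrt rho - y)) <= l1).
Proof.
  intros ha hb hq0 hq1 hJq rho sig m c.
  assert (hsig : 0 < sig). { replace sig with (2*q^2 * / (-b)) by (unfold sig; field; lra).
    apply Rmult_lt_0_compat. nra. apply Rinv_0_lt_compat; lra. }
  assert (hsr : sig < rho).
  { unfold sig, rho. apply Rmult_lt_reg_l with (-b). lra.
    replace (-b * (-2*q^2/b)) with (2*q^2) by (field; lra).
    replace (-b * ((q^2-a)/b)) with (a - q^2) by (field; lra). lra. }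
  assert (hc : 0 < c) by (unfold c; lra).
  assert (hm1 : sig < m) by (unfold m; lra).
  assert (hm2 : m < rho) by (unfold m; lra).
  exists (Rmin (c*(m-rho)^2*(m-sig)/m) (c*rho*(2*rho-sig)/2)). split.
  { apply Rmin_glb_lt.
    - assert (0 < (m-rho)^2) by (replace ((m-rho)^2) with ((rho-m)^2) by ring; apply pow_lt; lra).
      unfold Rdiv. apply Rmult_lt_0_compat. apply Rmult_lt_0_compat. apply Rmult_lt_0_compat; lra.
      lra. apply Rinv_0_lt_compat. lra.
    - assert (0 < c * rho) by nra. nra. }
  intros E HE.
  destruct (roots_spec a b J q E ha hb hq0 hq1 hJq HE) as [s1 [s2 [s3 [H1 [H2 [H3 [F [R1 R2]]]]]]]].
  fold rho sig m c in H1, H2, H3, F.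
  set (d := Eplus_J a b q - E).
  assert (hd : 0 < d) by (unfold d; lra).
  assert (Pid : forall s, Pp a b J E s = c*(s-rho)^2*(s-sig) - d*s).
  { intros s. unfold c, rho, sig, d. apply Pp_id; auto; lra. }
  assert (Id1 : forall r, r <> 0 -> (E - VJ a b J r) * r^2 = c*(r^2-s1)*(r^2-s2)*(r^2-s3)).
  { intros r Hr. rewrite VJ_id by auto. rewrite <- F. field. auto. }
  assert (Id2 : forall r, r <> 0 -> (E - VJ a b J r) * r^2 = c*(r^2-rho)^2*(r^2-sig) - d*r^2).
  { intros r Hr. rewrite VJ_id by auto. rewrite <- Pid. field. auto. }
  destruct (integ_E a b J E s1 s2 s3 rho sig c d) as [l1 [T1 [B1 L1]]]; auto; try lra.
  exists l1, s2. split; auto. split; auto. split. lra. split.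
  { assert (Pp a b J E s2 = 0) by (rewrite F; ring). rewrite Pid in H. fold d. nra. }
  intros y Hy1 Hy2. apply L1; auto. apply Rlt_le_trans with (sqrt m); auto. apply sqrt_lt_1_alt; lra. lra.
Qed.

Lemma diverge a b J q :
  0 < a -> b < 0 -> 0 < q -> q^2 < a/3 -> J = q*(q^2-a)/b ->
  forall N, exists eta, 0 < eta /\ forall E, Eplus_J a b q - eta < E < Eplus_J a b q -> N < Tper a b J E.
Proof.
  intros ha hb hq0 hq1 hJq N.
  destruct (key a b J q ha hb hq0 hq1 hJq) as [d0 [hd0 K]].
  set (rho := (q^2-a)/b) in K. set (sig := -2*q^2/b) in K. set (m := (sig+rho)/2) in K. set (c := -b/4) in K.
  assert (hsig : 0 < sig). { replace sig with (2*q^2 * / (-b)) by (unfold sig; field; lra).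
    apply Rmult_lt_0_compat. nra. apply Rinv_0_lt_compat; lra. }
  assert (hsr : sig < rho).
  { unfold sig, rho. apply Rmult_lt_reg_l with (-b). lra.
    replace (-b * (-2*q^2/b)) with (2*q^2) by (field; lra).
    replace (-b * ((q^2-a)/b)) with (a - q^2) by (field; lra). lra. }
  assert (hc : 0 < c) by (unfold c; lra).
  assert (hm1 : sig < m) by (unfold m; lra).
  assert (hm2 : m < rho) by (unfold m; lra).
  set (p0 := sqrt m). set (rs := sqrt rho).
  assert (hp0 : 0 < p0) by (apply sqrt_lt_R0; lra).
  assert (hprs : p0 < rs) by (apply sqrt_lt_1_alt; lra).
  assert (ers : rs^2 = rho) by (apply pow2_sqrt; lra).
  set (k := / sqrt (8 * c * rho)).
  assert (hk : 0 < k) by (apply Rinv_0_lt_compat, sqrt_lt_R0; nra).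
  set (N' := Rmax 0 (N / (2*k)) + 1).
  assert (hN'1 : 0 < N') by (unfold N'; pose proof (Rmax_l 0 (N/(2*k))); lra).
  assert (hN'2 : N < 2 * k * N').
  { unfold N'. pose proof (Rmax_r 0 (N/(2*k))).
    assert (N = 2*k*(N/(2*k))) by (field; lra). nra. }
  assert (hex : exp (- N') < 1). { rewrite <- exp_0. apply exp_increasing. lra. }
  assert (hex0 : 0 < exp (- N')) by apply exp_pos.
  set (th := (rs - p0) * exp (- N')).
  assert (hth : 0 < th) by (unfold th; apply Rmult_lt_0_compat; lra).
  assert (hth2 : th < rs - p0).
  { unfold th. pattern (rs - p0) at 2; rewrite <- (Rmult_1_r (rs - p0)). apply Rmult_lt_compat_l; lra. }
  assert (hrs : 0 < rs) by lra.
  set (eta2 := (rs*th)^2 * c * (m - sig) / rho).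
  assert (heta2 : 0 < eta2).
  { unfold eta2. unfold Rdiv. apply Rmult_lt_0_compat. apply Rmult_lt_0_compat. apply Rmult_lt_0_compat.
    apply pow_lt. nra. lra. lra. apply Rinv_0_lt_compat. lra. }
  exists (Rmin d0 eta2). split. apply Rmin_glb_lt; auto.
  intros E HE.
  assert (HE1 : Eplus_J a b q - d0 < E < Eplus_J a b q) by (pose proof (Rmin_l d0 eta2); lra).
  assert (HE2 : Eplus_J a b q - E < eta2) by (pose proof (Rmin_r d0 eta2); lra).
  destruct (K E HE1) as [l1 [s2 [T1 [B1 [Hs2 [Heq L]]]]]].
  set (d := Eplus_J a b q - E) in *.
  assert (hd : 0 < d) by (unfold d; lra).
  assert (Hsq : (rho - s2)^2 < (rs * th)^2).
  { assert (c * (m - sig) * (rho - s2)^2 <= d * s2).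
    { rewrite <- Heq. replace ((rho - s2)^2) with ((s2 - rho)^2) by ring.
      assert (0 <= (s2-rho)^2) by apply pow2_ge_0. assert (0 <= c * (s2-rho)^2) by nra. nra. }
    assert (d * s2 < eta2 * rho) by nra.
    assert (eta2 * rho = (rs*th)^2 * (c * (m - sig))) by (unfold eta2; field; lra).
    assert (0 < c * (m - sig)) by nra. nra. }
  assert (Hs2' : rho - s2 < rs * th).
  { assert (0 < rs * th) by nra. destruct (Rlt_or_le (rho - s2) (rs * th)) as [|Hc]; auto. exfalso.
    assert ((rs*th)^2 <= (rho - s2)^2) by (apply pow_incr; lra). lra. }
  set (r2 := sqrt s2).
  assert (er2 : r2^2 = s2) by (apply pow2_sqrt; lra).
  assert (hr2 : 0 < r2) by (apply sqrt_lt_R0; lra).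
  assert (hr2rs : r2 < rs) by (apply sqrt_lt_1_alt; lra).
  assert (Hd : rs - r2 < th) by nra.
  set (y := rs - th).
  assert (Ly := L y ltac:(unfold y; fold p0; lra) ltac:(unfold y; fold r2; lra)).
  fold p0 rs k in Ly.
  replace (rs - y) with th in Ly by (unfold y; ring).
  unfold th in Ly. rewrite ln_mult, ln_exp in Ly by lra.
  rewrite T1. nra.
Qed.

Lemma lim_pinf (F : R -> R) Es :
  (forall N, exists eta, 0 < eta /\ forall E, Es - eta < E < Es -> N < F E) ->
  filterlim F (at_left Es) (Rbar_locally p_infty).
Proof.
  intros H P [M HM]. destruct (H M) as [eta [he Hf]].
  apply at_left_ev with eta. exact he. intros x Hx. apply HM, Hf; lra.
Qed.

Lemma lim_fin (F : R -> R) Es L :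
  (forall eps, 0 < eps -> exists eta, 0 < eta /\ forall E, Es - eta < E < Es -> Rabs (F E - L) < eps) ->
  filterlim F (at_left Es) (locally L).
Proof.
  intros H. apply filterlim_locally. intros [eps he]. destruct (H eps he) as [eta [hn Hf]].
  apply at_left_ev with eta. exact hn. intros x Hx. change (Rabs (F x - L) < eps). apply Hf; lra.
Qed.

Theorem proposition2 (a b J q : R)
  (ha : 0 < a) (hb : b < 0)
  (hJ0 : 0 < J) (hJ1 : J < sqrt (4 / 27 * a ^ 3 / b ^ 2))
  (hq0 : 0 < q) (hq1 : q ^ 2 < a / 3) (hJq : J = q * (q ^ 2 - a) / b) :
  filterlim (fun E => Tper a b J E) (at_left (Eplus_J a b q)) (Rbar_locally p_infty) /\
  filterlim (fun E => Mtil a b J E) (at_left (Eplus_J a b q)) (Rbar_locally p_infty) /\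
  filterlim (fun E => Mtil a b J E / Tper a b J E) (at_left (Eplus_J a b q))
    (locally ((q ^ 2 - a) / (2 * b))) /\
  filterlim (fun E => Ptil a b J E) (at_left (Eplus_J a b q)) (Rbar_locally p_infty) /\
  filterlim (fun E => Ptil a b J E / Tper a b J E) (at_left (Eplus_J a b q))
    (locally (q * (q ^ 2 - a) / (2 * b))).
Proof.
  pose proof (diverge a b J q ha hb hq0 hq1 hJq) as Dv.
  destruct (key a b J q ha hb hq0 hq1 hJq) as [d0 [hd0 K]].
  set (rho := (q^2-a)/b) in K. set (c := -b/4) in K.
  set (Es := Eplus_J a b q) in *.
  set (B := 4 * sqrt 2 * sqrt (rho / (2 * c))) in K.
  assert (hrho : 0 < rho).
  { unfold rho. replace ((q^2-a)/b) with ((a - q^2) * / (-b)) by (field; lra).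
    apply Rmult_lt_0_compat. lra. apply Rinv_0_lt_compat; lra. }
  assert (hB : 0 <= B).
  { unfold B. apply Rmult_le_pos. apply Rmult_le_pos. lra. apply sqrt_pos. apply sqrt_pos. }
  assert (Comb : forall N, exists eta, 0 < eta /\ forall E, Es - eta < E < Es ->
     N < Tper a b J E /\ exists l1, Tper a b J E = 2 * l1 /\ 0 <= rho * l1 - Mtil a b J E <= B).
  { intros N. destruct (Dv N) as [eta [he Hd]]. exists (Rmin eta d0). split. apply Rmin_glb_lt; auto.
    intros E HE. pose proof (Rmin_l eta d0). pose proof (Rmin_r eta d0). split. apply Hd; lra.
    destruct (K E ltac:(lra)) as [l1 [s2 [T1 [B1 _]]]]. exists l1. auto. }
  split; [|split; [|split; [|split]]].
  - apply lim_pinf. exact Dv.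
  - apply lim_pinf. intros N. destruct (Comb (2 * (Rabs N + B) / rho)) as [eta [he H]].
    exists eta. split; auto. intros E HE. destruct (H E HE) as [HT [l1 [T1 B1]]].
    rewrite T1 in HT. assert (rho * l1 > Rabs N + B).
    { assert (2 * (Rabs N + B) / rho * rho = 2 * (Rabs N + B)) by (field; lra). nra. }
    pose proof (Rle_abs N). lra.
  - apply lim_fin. intros eps heps. destruct (Comb (B / eps)) as [eta [he H]].
    exists eta. split; auto. intros E HE. destruct (H E HE) as [HT [l1 [T1 B1]]].
    assert (hl1 : 0 < l1).
    { assert (0 <= B / eps) by (unfold Rdiv; apply Rmult_le_pos; [lra| apply Rlt_le, Rinv_0_lt_compat; lra]). lra. }
    rewrite T1. replace ((q ^ 2 - a) / (2 * b)) with (rho / 2) by (unfold rho; field; lra).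
    replace (Mtil a b J E / (2 * l1) - rho / 2) with (- ((rho * l1 - Mtil a b J E) / (2 * l1))) by (field; lra).
    rewrite Rabs_Ropp, Rabs_right.
    2:{ apply Rle_ge. unfold Rdiv. apply Rmult_le_pos. lra. apply Rlt_le, Rinv_0_lt_compat. lra. }
    apply Rle_lt_trans with (B / (2 * l1)).
    { unfold Rdiv. apply Rmult_le_compat_r. apply Rlt_le, Rinv_0_lt_compat. lra. lra. }
    rewrite T1 in HT. apply Rmult_lt_reg_r with (2 * l1). lra.
    replace (B / (2 * l1) * (2 * l1)) with B by (field; lra).
    assert (B / eps * eps = B) by (field; lra). nra.
  - apply lim_pinf. intros N. destruct (Dv (2 * Rabs N / J)) as [eta [he H]].
    exists eta. split; auto. intros E HE. pose proof (H E HE) as HT. unfold Ptil.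
    assert (2 * Rabs N / J * J = 2 * Rabs N) by (field; lra).
    pose proof (Rle_abs N). nra.
  - apply lim_fin. intros eps heps. destruct (Dv 0) as [eta [he H]].
    exists eta. split; auto. intros E HE. pose proof (H E HE) as HT. unfold Ptil.
    replace (/ 2 * Tper a b J E * J / Tper a b J E - q * (q ^ 2 - a) / (2 * b)) with 0.
    rewrite Rabs_R0; lra. rewrite hJq. field. split. lra. rewrite <- hJq. lra.
Qed.
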